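(* Let $A,X^1,\ldots,X^m\in M_n(\mathbb{C})$ with $1\le m\le n$. Let $B$ be the $\binom{n}{m}\times\binom{n}{m}$ matrix indexed by $Q_{m,n}$ whose $(\mathcal{J},\mathcal{I})$-entry is $\operatorname{per}A(\mathcal{I}|\mathcal{J})$, and let $C=P_m(X^1\vee\cdots\vee X^m)P_m$, viewed as the $\binom{n}{m}\times\binom{n}{m}$ matrix indexed by $Q_{m,n}$ (with respect to the basis $\{e_\alpha:\alpha\in Q_{m,n}\}$). Then $$D^m\operatorname{per}(A)(X^1,\ldots,X^m)=m!\,\operatorname{tr}(BC).$$ In particular $D^m\operatorname{per}(A)(X,\ldots,X)=m!\,\operatorname{tr}\big(B\,P_m(\vee^mX)P_m\big)$.
   Context: $\mathcal{H}=\mathbb{C}^n$ with orthonormal basis $e_1,\ldots,e_n$; $G_{m,n}=\{(i_1,\ldots,i_m):1\le i_1\le\cdots\le i_m\le n\}$, $Q_{m,n}\subseteq G_{m,n}$ the strictly increasing tuples. $\vee^m\mathcal{H}$ has orthonormal basis $\{m(\alpha)^{-1/2}e_\alpha:\alpha\in G_{m,n}\}$, where $e_\alpha=e_{\alpha_1}\vee\cdots\vee e_{\alpha_m}$ and $m(\alpha)=m_1!\cdots m_\ell!$ for multiplicities $m_1,\ldots,m_\ell$ of the distinct values in $\alpha$. $X^1\vee\cdots\vee X^m$ is the restriction to $\vee^m\mathcal{H}$ of $\frac{1}{m!}\sum_{\sigma\in S_m}X^{\sigma(1)}\otimes\cdots\otimes X^{\sigma(m)}$; $\vee^mX=X\vee\cdots\vee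 X$. $P_m$ is the orthogonal projection of $\vee^m\mathcal{H}$ onto the span of $\{e_\alpha:\alpha\in Q_{m,n}\}$. $A(\mathcal{I}|\mathcal{J})$ is $A$ with rows $\mathcal{I}$, columns $\mathcal{J}$ deleted; $\operatorname{per}$ is the permanent; $D^m\operatorname{per}(A)(X^1,\ldots,X^m)=\frac{\partial^m}{\partial t_1\cdots\partial t_m}\big|_{t=0}\operatorname{per}(A+\sum_it_iX^i)$. *)

(* Defs.v *)
From HB Require Import structures.
From mathcomp Require Import all_boot all_order all_algebra all_fingroup.
Set Implicit Arguments. Unset Strict Implicit. Unset Printing Implicit Defensive.
Import Order.TTheory GRing.Theory Num.Theory.
Local Open Scope ring_scope.

Definition per (R : comNzRingType) (k : nat) (M : 'M[R]_k) : R :=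
  \sum_(s : 'S_k) \prod_(i < k) M i (s i).

(* mpoly R k = R[t_0][t_1]...[t_{k-1}] (iterated univariate polynomials). *)
Fixpoint mpoly (R : comNzRingType) (k : nat) : comNzRingType :=
  match k with
  | 0 => R
  | k'.+1 => GRing.ComNzRing.clone _ {poly (mpoly R k')}
  end.

Fixpoint mconst (R : comNzRingType) (k : nat) : R -> mpoly R k :=
  match k return R -> mpoly R k with
  | 0 => fun x => x
  | k'.+1 => fun x => (mconst k' x)%:P
  end.

Fixpoint mvar (R : comNzRingType) (k : nat) : nat -> mpoly R k :=
  match k return nat -> mpoly R k with
  | 0 => fun _ => 0
  | k'.+1 => fun i => if i == k' then 'X else (@mvar R k' i)%:P
  end.

Fixpoint mderiv (R : comNzRingType) (k : nat) : nat -> mpoly R k -> mpoly R k :=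
  match k return nat -> mpoly R k -> mpoly R k with
  | 0 => fun _ p => 0
  | k'.+1 => fun i (p : {poly mpoly R k'}) =>
      if i == k' then deriv p else map_poly (@mderiv R k' i) p
  end.

Fixpoint meval0 (R : comNzRingType) (k : nat) : mpoly R k -> R :=
  match k return mpoly R k -> R with
  | 0 => fun p => p
  | k'.+1 => fun (p : {poly mpoly R k'}) => @meval0 R k' p.[0]
  end.

(* D^m per(A)(X^1,...,X^m)
   = d^m/dt_1...dt_m |_{t=0} per(A + sum_i t_i X^i)  (formal derivatives). *)
Definition Dper (R : comNzRingType) (n m : nat) (A : 'M[R]_n)
    (X : 'I_m -> 'M[R]_n) : R :=
  let M : 'M[mpoly R m]_n :=
    \matrix_(r, c) (mconst m (A r c)
                    + \sum_(i < m) mvar R m i * mconst m (X i r c)) in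
  meval0 (foldr (fun i p => mderiv i p) (per M) (iota 0 m)).

(* ---------- Q_{m,n} : strictly increasing maps 'I_m -> 'I_n ---------- *)
Definition incr (m n : nat) (a : {ffun 'I_m -> 'I_n}) : bool :=
  [forall i : 'I_m, forall j : 'I_m, (i < j)%N ==> (a i < a j)%N].

(* A(I|J): A with the rows in I and the columns in J deleted
   (remaining rows/columns in increasing order). *)
Definition del_mx (R : comNzRingType) (n m : nat) (A : 'M[R]_n)
    (I J : {ffun 'I_m -> 'I_n}) : 'M[R]_(n - m) :=
  conform_mx (0 : 'M[R]_(n - m))
    (mxsub (enum_val : 'I_#|~: [set I k | k : 'I_m]| -> 'I_n)
           (enum_val : 'I_#|~: [set J k | k : 'I_m]| -> 'I_n) A).

(* vectors of (C^n)^{(x)m} are functions on multi-indices 'I_m -> 'I_n,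
   coordinates w.r.t. the basis e_{a_1} (x) ... (x) e_{a_m}. *)
Definition tvec (C : numClosedFieldType) (m n : nat) :=
  {ffun 'I_m -> 'I_n} -> C.

Definition tinner (C : numClosedFieldType) (m n : nat) (u v : tvec C m n) : C :=
  \sum_(a : {ffun 'I_m -> 'I_n}) (u a)^* * v a.

Definition tensor_op (C : numClosedFieldType) (m n : nat)
    (X : 'I_m -> 'M[C]_n) (v : tvec C m n) : tvec C m n :=
  fun a => \sum_(b : {ffun 'I_m -> 'I_n}) (\prod_(k < m) X k (a k) (b k)) * v b.

Definition sym_op (C : numClosedFieldType) (m n : nat)
    (X : 'I_m -> 'M[C]_n) (v : tvec C m n) : tvec C m n :=
  fun a => (m`!%:R)^-1 *
    \sum_(s : 'S_m) tensor_op (fun k => X (s k)) v a.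

(* e_alpha = e_{alpha_1} v ... v e_{alpha_m}
           = (m!)^{-1/2} sum_sigma e_{alpha_sigma(1)} (x) ... (x) e_{alpha_sigma(m)}
   (the normalisation for which {m(alpha)^{-1/2} e_alpha} is orthonormal) *)
Definition sym_basis (C : numClosedFieldType) (m n : nat)
    (alpha : {ffun 'I_m -> 'I_n}) : tvec C m n :=
  fun a => (sqrtC (m`!%:R))^-1 *
    \sum_(s : 'S_m) (a == [ffun k => alpha (s k)])%:R.

(* P_m : orthogonal projection onto span{e_alpha : alpha in Q_{m,n}}
   (an orthonormal family) *)
Definition Pm (C : numClosedFieldType) (m n : nat) (v : tvec C m n) : tvec C m n :=
  fun a => \sum_(alpha : {ffun 'I_m -> 'I_n} | incr alpha)
             tinner (sym_basis C alpha) v * sym_basis C alpha a.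

Definition Cmx (C : numClosedFieldType) (m n : nat) (X : 'I_m -> 'M[C]_n)
    (I J : {ffun 'I_m -> 'I_n}) : C :=
  tinner (sym_basis C I) (Pm (sym_op X (Pm (sym_basis C J)))).

(* Main.v *)
Require Import Defs.
From HB Require Import structures.
From mathcomp Require Import all_boot all_order all_algebra all_fingroup.
Import Order.TTheory GRing.Theory Num.Theory.
Local Open Scope ring_scope.
Unset Printing Implicit Defensive.

Section Poly.
Variable R : comNzRingType.

Lemma mderiv0 k i : @mderiv R k i 0 = 0.
Proof.
elim: k => [|k IH] //=; case: (i == k); first by rewrite deriv0.
by rewrite map_poly0.
Qed.

Lemma foldr_mderiv0 k s : foldr (fun i p => @mderiv R k i p) 0 s = 0.
Proof. by elim: s => //= i s ->; rewrite mderiv0. Qed.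

Definition Lk k (p : mpoly R k) : R :=
  meval0 (foldr (fun i p => @mderiv R k i p) p (iota 0 k)).

Lemma foldr_map k s (q : {poly mpoly R k}) : all (fun i => i != k) s ->
  foldr (fun i p => @mderiv R k.+1 i p) q s =
  map_poly (fun c => foldr (fun i p => @mderiv R k i p) c s) q.
Proof.
elim: s => [|i s IH] /=; first by rewrite map_poly_id.
case/andP => H1 H2; rewrite IH // (negbTE H1).
rewrite -map_poly_comp_id0 //; exact: mderiv0.
Qed.

Lemma LkS k (p : {poly mpoly R k}) : Lk k.+1 p = Lk k (p`_1).
Proof.
have E : iota 0 k.+1 = iota 0 k ++ [:: k] by rewrite -addn1 iotaD.
rewrite /Lk E foldr_cat /= eqxx foldr_map; last first.
  by apply/allP => i; rewrite mem_iota add0n => /andP[_ H]; rewrite neq_ltn H.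
rewrite horner_coef0 coef_map_id0 ?foldr_mderiv0 // coef_deriv mulr1n.
by [].
Qed.

Lemma Lk0 k : Lk k 0 = 0.
Proof. by elim: k => [|k IH] //; rewrite LkS coef0. Qed.

Lemma LkD k (p q : mpoly R k) : Lk k (p + q) = Lk k p + Lk k q.
Proof.
elim: k p q => [|k IH] p q //.
by rewrite !LkS coefD IH.
Qed.

Lemma Lk_sum k (I : finType) (P : pred I) (F : I -> mpoly R k) :
  Lk k (\sum_(i | P i) F i) = \sum_(i | P i) Lk k (F i).
Proof. exact: (big_morph _ (@LkD k) (@Lk0 k)). Qed.

Lemma LkZ k c (p : mpoly R k) : Lk k (mconst k c * p) = c * Lk k p.
Proof.
elim: k p => [|k IH] p //.
by rewrite !LkS /= coefCM IH.
Qed.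

End Poly.

Lemma coef01_prod (A : comNzRingType) (T : eqType) (s : seq T) (c d : T -> A) :
  uniq s ->
  (\prod_(r <- s) ((c r)%:P + 'X * (d r)%:P))`_0 = \prod_(r <- s) c r /\
  (\prod_(r <- s) ((c r)%:P + 'X * (d r)%:P))`_1 =
     \sum_(r <- s) d r * \prod_(r' <- s | r' != r) c r'.
Proof.
elim: s => [|r0 s IH] /=.
  by rewrite !big_nil !coef1.

case/andP => Hr0 Hu; case: (IH Hu) => IH0 IH1.
rewrite !big_cons !mulrDl !coefD -mulrA !coefCM !coefXM /= IH0 IH1 coefCM.
rewrite eqxx /= addr0; split => //.
rewrite addrC; congr (_ + _).
  congr (_ * _); rewrite IH0 big_seq_cond [RHS]big_seq_cond; apply: eq_bigl => r /=.
  by case: (boolP (r \in s)) => //= Hr; apply/esym/eqP => E; rewrite -E Hr in Hr0.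
rewrite mulr_sumr [LHS]big_seq [RHS]big_seq; apply: eq_bigr => r Hr.
rewrite big_cons; have -> : (r0 != r) by apply/eqP => E; rewrite E Hr in Hr0.
by rewrite mulrCA.
Qed.

Lemma imset_codom (aT rT : finType) (f : aT -> rT) y :
  (y \in [set f x | x in aT]) = (y \in codom f).
Proof.
apply/imsetP/codomP => [[x _ ->]|[x ->]]; by exists x.
Qed.

Section P1.
Variable R : comNzRingType.
Variable n : nat.

Definition joinf k (p : 'I_n * {ffun 'I_k -> 'I_n}) : {ffun 'I_k.+1 -> 'I_n} :=
  [ffun i : 'I_k.+1 => if (insub (val i) : option 'I_k) is Some j then p.2 j else p.1].
Definition splitf k (g : {ffun 'I_k.+1 -> 'I_n}) : 'I_n * {ffun 'I_k -> 'I_n} :=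
  (g ord_max, [ffun j : 'I_k => g (widen_ord (leqnSn k) j)]).

Lemma joinK k : cancel (@joinf k) (@splitf k).
Proof.
move=> [r f]; rewrite /splitf /joinf ffunE insubN ?ltnn //; congr (_, _).
by apply/ffunP => j; rewrite !ffunE /= valK.
Qed.

Lemma splitK k : cancel (@splitf k) (@joinf k).
Proof.
move=> g; apply/ffunP => i; rewrite /splitf /joinf ffunE /=.
case: insubP => [j Hj Ej|Hn]; first by rewrite ffunE; congr (g _); apply: val_inj.
congr (g _); apply: val_inj => /=; move: (ltn_ord i); rewrite ltnS leq_eqVlt.
by rewrite (negbTE Hn) orbF => /eqP.
Qed.

Lemma joinf_max k p : @joinf k p ord_max = p.1.
Proof. by rewrite ffunE insubN ?ltnn. Qed.

Lemma joinf_widen k p j : @joinf k p (widen_ord (leqnSn k) j) = p.2 j.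
Proof. by rewrite ffunE /= valK. Qed.

Lemma codom_join k p : codom (@joinf k p) = rcons (codom p.2) p.1.
Proof.
rewrite !codomE enum_ordSr map_rcons -map_comp joinf_max; congr rcons.
by apply: eq_map => j /=; rewrite joinf_widen.
Qed.

Lemma injb_codom (aT rT : finType) (f : aT -> rT) : injectiveb f = uniq (codom f).
Proof. by rewrite /injectiveb /dinjectiveb codomE. Qed.

Lemma forall_codom k (f : {ffun 'I_k -> 'I_n}) (S : {set 'I_n}) :
  [forall i, f i \in S] = all (fun y => y \in S) (codom f).
Proof.
apply/forallP/allP => H; first by move=> y /codomP [i ->].
by move=> i; apply: H; exact: codom_f.
Qed.

Lemma all_setD1 (s : seq 'I_n) (S : {set 'I_n}) r :
  all (fun y => y \in S :\ r) s = (r \notin s) && all (fun y => y \in S) s.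
Proof.
elim: s => //= y s ->; rewrite in_setD1 in_cons negb_or eq_sym.
by case: (r != y); case: (y \in S); case: (r \in s).
Qed.

Lemma P1 k (S : {set 'I_n}) (a : 'I_n -> R) (x : 'I_n -> nat -> R) :
  Lk R k (\prod_(r in S) (mconst k (a r) + \sum_(i < k) mvar R k i * mconst k (x r i))) =
  \sum_(f : {ffun 'I_k -> 'I_n} | injectiveb f && [forall i, f i \in S])
     (\prod_(i < k) x (f i) i) * \prod_(r in S | r \notin [set f i | i in 'I_k]) a r.
Proof.
elim: k S => [|k IH] S.
  rewrite (big_pred1 (ffun0 (card_ord 0))); last first.
    move=> f /=; apply/idP/eqP => [_|_]; first by apply/ffunP => -[].
    by apply/andP; split; [apply/injectiveP => -[] | apply/forallP => -[]].
  rewrite big_ord0 mul1r /=; apply: eq_big => r.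
    by rewrite imset_codom codomE enum_ord0 /= andbT.
  by move=> _; rewrite big_ord0 addr0.
have Ef : forall r, mconst k.+1 (a r) + \sum_(i < k.+1) mvar R k.+1 i * mconst k.+1 (x r i)
   = (mconst k (a r) + \sum_(i < k) mvar R k i * mconst k (x r i))%:P
     + 'X * (mconst k (x r k))%:P.
  move=> r; rewrite big_ord_recr /= eqxx rmorphD rmorph_sum /= addrA; congr (_ + _ + _).
  apply: eq_bigr => i _; rewrite /= ifN; first by rewrite rmorphM.
  by rewrite neq_ltn ltn_ord.
rewrite (eq_bigr _ (fun r _ => Ef r)) -big_enum (LkS R k).
case: (coef01_prod _ _ (enum S) (fun r => mconst k (a r) + \sum_(i < k) mvar R k i * mconst k (x r i))
   (fun r => mconst k (x r k)) (enum_uniq _)) => _ ->.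
rewrite big_enum Lk_sum.
rewrite (eq_bigr (fun r => x r k * \sum_(f : {ffun 'I_k -> 'I_n} | injectiveb f && [forall i, f i \in S :\ r]) ((\prod_(i<k) x (f i) i) * \prod_(r' in S :\ r | r' \notin [set f i | i in 'I_k]) a r'))); last first.
  move=> r _; rewrite LkZ big_enum_cond -IH; congr (_ * Lk R k _).
  by apply: eq_bigl => r'; rewrite in_setD1 andbC.
rewrite [RHS](reindex (@joinf k)); last first.
  by apply: onW_bij; exists (@splitf k); [exact: joinK | exact: splitK].
under eq_bigr do rewrite mulr_sumr.
rewrite pair_big_dep; apply: eq_big => [[r f]|[r f] _] /=.
  rewrite !injb_codom !forall_codom codom_join rcons_uniq all_rcons all_setD1.
  by case: (r \in S); case: (r \in codom f); rewrite ?andbF ?andbT.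
rewrite big_ord_recr /= joinf_max /=.
rewrite mulrA [x r k * _]mulrC; congr (_ * _ * _).
  by apply: eq_bigr => i _; rewrite joinf_widen.
apply: eq_bigl => r'; rewrite !imset_codom codom_join mem_rcons in_cons in_setD1.
by case: (r' == r); case: (r' \in S); case: (r' \in codom f).
Qed.
End P1.

Lemma insubd_permE (T : finType) (g : {ffun T -> T}) x :
  injectiveb g -> (insubd (1%g : {perm T}) g) x = g x.
Proof. by move=> H; rewrite -pvalE; have := insubdK (1%g : {perm T}) H; move=> /= ->. Qed.

Section Sort.
Variables m n : nat.

Definition ltO (x y : 'I_n) : bool := (val x < val y)%N.
Lemma ltO_trans : transitive ltO.
Proof. by move=> y x z; apply: ltn_trans. Qed.
Lemma ltO_irr : irreflexive ltO.
Proof. by move=> x; rewrite /ltO ltnn. Qed.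

Lemma incr_inj (I : {ffun 'I_m -> 'I_n}) : incr I -> injective I.
Proof.
move=> /forallP H i j E; apply/eqP; case: (ltngtP i j) => // [lt|lt|/val_inj -> //].
  by move: (H i) => /forallP /(_ j) /implyP /(_ lt); rewrite E ltnn.
by move: (H j) => /forallP /(_ i) /implyP /(_ lt); rewrite E ltnn.
Qed.

Lemma enum_sorted (S : {set 'I_n}) : sorted ltO (enum S).
Proof.
have : sorted ltO (enum 'I_n).
  by have := iota_ltn_sorted 0 n; rewrite -val_enum_ord sorted_map.
apply: subseq_sorted; first exact: ltO_trans.
rewrite /enum_mem [X in subseq _ X](@eq_filter _ _ predT) // filter_predT; exact: filter_subseq.
Qed.

Lemma incr_enum (I : {ffun 'I_m -> 'I_n}) : incr I ->
  enum [set I i | i in 'I_m] = map I (enum 'I_m).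
Proof.
move=> HI; apply: (irr_sorted_eq ltO_trans ltO_irr); first exact: enum_sorted.
  rewrite sorted_map.
  have : sorted (fun i j : 'I_m => (val i < val j)%N) (enum 'I_m).
    by have := iota_ltn_sorted 0 m; rewrite -val_enum_ord sorted_map.
  apply: sub_sorted => i j /= lt; move/forallP: HI => /(_ i) /forallP /(_ j).
  by move/implyP/(_ lt).
move=> y; rewrite mem_enum; apply/imsetP/mapP => [[i _ ->]|[i _ ->]]; by exists i; rewrite ?mem_enum.
Qed.

Definition sortf (f : {ffun 'I_m -> 'I_n}) : {ffun 'I_m -> 'I_n} :=
  [ffun k => nth (f k) (enum [set f i | i in 'I_m]) k].

Lemma size_enum_img (f : {ffun 'I_m -> 'I_n}) : injective f ->
  size (enum [set f i | i in 'I_m]) = m.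
Proof. by move=> Hf; rewrite -cardE card_imset // card_ord. Qed.

Lemma sortf_incr_id (I : {ffun 'I_m -> 'I_n}) (u : {perm 'I_m}) : incr I ->
  sortf [ffun k => I (u k)] = I.
Proof.
move=> HI; apply/ffunP => k; rewrite ffunE.
have -> : [set [ffun k => I (u k)] i | i in 'I_m] = [set I i | i in 'I_m].
  apply/setP => y; apply/imsetP/imsetP => [[i _ ->]|[i _ ->]].
    by exists (u i); rewrite ?ffunE.
  by exists (u^-1%g i); rewrite // ffunE permKV.
by rewrite incr_enum // (nth_map k) ?size_enum_ord // nth_ord_enum.
Qed.

Lemma sortf_incr (f : {ffun 'I_m -> 'I_n}) : injective f -> incr (sortf f).
Proof.
move=> Hf; apply/forallP => i; apply/forallP => j; apply/implyP => lt.
rewrite !ffunE.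
have Hs := size_enum_img f Hf.
set s := enum _.
rewrite [nth (f i) s i](set_nth_default (f j)) ?Hs //.
apply: (sorted_ltn_nth ltO_trans (f j) (enum_sorted _)) => //; by rewrite inE Hs.
Qed.

Definition uperm (f : {ffun 'I_m -> 'I_n}) : {perm 'I_m} :=
  insubd (1%g : {perm 'I_m}) [ffun k => odflt k [pick j | sortf f j == f k]].

Lemma sortf_ex (f : {ffun 'I_m -> 'I_n}) : injective f -> forall k, exists j, sortf f j = f k.
Proof.
move=> Hf k.
have Hk : f k \in enum [set f i | i in 'I_m] by rewrite mem_enum; apply/imsetP; exists k.
have Hlt : (index (f k) (enum [set f i | i in 'I_m]) < m)%N by rewrite -[X in (_ < X)%N](size_enum_img f Hf) index_mem.
exists (Ordinal Hlt); by rewrite ffunE /= nth_index.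
Qed.

Lemma uperm_ok (f : {ffun 'I_m -> 'I_n}) : injective f -> forall k, sortf f (uperm f k) = f k.
Proof.
move=> Hf.
set g := [ffun k => odflt k [pick j | sortf f j == f k]].
have Hg : forall k, sortf f (g k) = f k.
  move=> k; rewrite /g (ffunE (fun k0 : 'I_m => odflt k0 [pick j | sortf f j == f k0])); case: (pickP (fun j => sortf f j == f k)) => [j /eqP //|H].
  by case: (sortf_ex f Hf k) => j0 Ej; move: (H j0); rewrite Ej eqxx.
have Hinj : injectiveb g by apply/injectiveP => k1 k2 E; apply: Hf; rewrite -!Hg E.
by move=> k; rewrite /uperm insubd_permE.
Qed.

Lemma sum_inj_incr (R : zmodType) (F : {ffun 'I_m -> 'I_n} -> R) :
  \sum_(f : {ffun 'I_m -> 'I_n} | injectiveb f) F f = \sum_(I : {ffun 'I_m -> 'I_n} | incr I) \sum_(u : {perm 'I_m}) F [ffun k => I (u k)].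
Proof.
rewrite [RHS]pair_big_dep /=.
rewrite (reindex_onto (fun p : {ffun 'I_m -> 'I_n} * {perm 'I_m} => [ffun k => p.1 (p.2 k)])
          (fun f => (sortf f, uperm f))) /=; last first.
  by move=> f /injectiveP Hf; apply/ffunP => k; rewrite ffunE uperm_ok.
apply: eq_bigl => [[I u]] /=; rewrite andbT.
case HI: (incr I).
  have Hinj : injective [ffun k => I (u k)].
    by move=> k1 k2; rewrite !ffunE => /(incr_inj I HI) /perm_inj.
  rewrite (introT (injectiveP _) Hinj) sortf_incr_id //=.
  suff -> : uperm [ffun k => I (u k)] = u by rewrite eqxx.
  apply/permP => k; apply: (incr_inj I HI).
  by rewrite -{1}(sortf_incr_id I u HI) uperm_ok // ffunE.
apply/negbTE/andP => [[/injectiveP Hinj /eqP [E1 _]]].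
by move: (sortf_incr _ Hinj); rewrite E1 HI.
Qed.
End Sort.

Lemma per_conform (R : comNzRingType) k p q (M : 'M[R]_(p, q)) (ep : p = k) (eq : q = k) :
  per (conform_mx (0 : 'M[R]_k) M) =
  \sum_(t : 'S_p) \prod_(i < p) M i (cast_ord (etrans ep (esym eq)) (t i)).
Proof.
subst k; subst q; rewrite conform_mx_id /per; apply: eq_bigr => t _.
by apply: eq_bigr => i _; rewrite cast_ord_id.
Qed.

Lemma card_compl_img n m (f : {ffun 'I_m -> 'I_n}) : injective f ->
  #|~: [set f k | k in 'I_m]| = (n - m)%N.
Proof.
move=> Hf; have := cardsC [set f k | k in 'I_m]; rewrite card_imset // card_ord.
by move=> E; rewrite -[X in (X - m)%N](card_ord n) -E addKn.
Qed.

Section Del.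
Variable R : comNzRingType.
Variables n m : nat.
Variable A : 'M[R]_n.
Variables f g : {ffun 'I_m -> 'I_n}.
Hypothesis Hf : injective f.
Hypothesis Hg : injective g.

Let Sf := [set f k | k in 'I_m].
Let Sg := [set g k | k in 'I_m].
Let p := #|~: Sf|.
Let E : p = #|~: Sg| := etrans (card_compl_img _ _ _ Hf) (esym (card_compl_img _ _ _ Hg)).
Let ef (i : 'I_p) : 'I_n := enum_val i.
Let eg (i : 'I_p) : 'I_n := enum_val (cast_ord E i).

Lemma ef_inj : injective ef.
Proof. exact: enum_val_inj. Qed.
Lemma eg_inj : injective eg.
Proof. by move=> i j /enum_val_inj /cast_ord_inj. Qed.
Lemma ef_notin i : ef i \notin Sf.
Proof. by have := enum_valP i; rewrite in_setC. Qed.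
Lemma eg_notin i : eg i \notin Sg.
Proof. by have := enum_valP (cast_ord E i); rewrite in_setC. Qed.
Lemma ef_surj r : r \notin Sf -> exists i, ef i = r.
Proof.
rewrite -in_setC => Hr; exists (enum_rank_in Hr r); exact: enum_rankK_in.
Qed.
Lemma eg_surj r : r \notin Sg -> exists i, eg i = r.
Proof.
rewrite -in_setC => Hr; exists (cast_ord (esym E) (enum_rank_in Hr r)).
by rewrite /eg cast_ordKV; exact: enum_rankK_in.
Qed.
Lemma inSf k : f k \in Sf.
Proof. by apply/imsetP; exists k. Qed.
Lemma inSg k : g k \in Sg.
Proof. by apply/imsetP; exists k. Qed.

Lemma rowcase r : (exists k, r = f k) \/ (exists i, r = ef i).
Proof.
case: (boolP (r \in Sf)) => [/imsetP [k _ ->]|Hr]; first by left; exists k.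
by right; case: (ef_surj r Hr) => i <-; exists i.
Qed.

Definition sfun (t : 'S_p) : {ffun 'I_n -> 'I_n} :=
  [ffun r => if [pick k | f k == r] is Some k then g k
             else if [pick i | ef i == r] is Some i then eg (t i) else r].

Lemma sfun_f t k : sfun t (f k) = g k.
Proof.
rewrite ffunE; case: (pickP (fun k0 => f k0 == f k)) => [k0 /eqP /Hf -> //|H].
by move: (H k); rewrite eqxx.
Qed.

Lemma sfun_ef t i : sfun t (ef i) = eg (t i).
Proof.
rewrite ffunE; case: (pickP (fun k0 => f k0 == ef i)) => [k0 /eqP E0|_].
  by move: (ef_notin i); rewrite -E0 inSf.
case: (pickP (fun i0 => ef i0 == ef i)) => [i0 /eqP /ef_inj -> //|H].
by move: (H i); rewrite eqxx.
Qed.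

Lemma sfun_inj t : injectiveb (sfun t).
Proof.
apply/injectiveP => r1 r2.
case: (rowcase r1) => [[k1 ->]|[i1 ->]]; case: (rowcase r2) => [[k2 ->]|[i2 ->]];
  rewrite ?sfun_f ?sfun_ef.
- by move/Hg ->.
- by move=> E0; move: (eg_notin (t i2)); rewrite -E0 inSg.
- by move=> E0; move: (eg_notin (t i1)); rewrite E0 inSg.
- by move/eg_inj/perm_inj ->.
Qed.

Definition hS (t : 'S_p) : 'S_n := insubd (1%g : 'S_n) (sfun t).

Lemma hSE t r : hS t r = sfun t r.
Proof. by rewrite /hS insubd_permE // sfun_inj. Qed.

Definition tfun (s : 'S_n) : {ffun 'I_p -> 'I_p} :=
  [ffun i => odflt i [pick j | eg j == s (ef i)]].

Definition hT (s : 'S_n) : 'S_p := insubd (1%g : 'S_p) (tfun s).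

Lemma tfun_spec (s : 'S_n) : [forall k, s (f k) == g k] ->
  forall i, eg (tfun s i) = s (ef i).
Proof.
move=> /forallP Hs i.
have Hn : s (ef i) \notin Sg.
  apply/negP => /imsetP [k _ Ek]; move: (Hs k); rewrite -Ek => /eqP /perm_inj Ek'.
  by move: (ef_notin i); rewrite -Ek' inSf.
rewrite ffunE; case: (pickP (fun j => eg j == s (ef i))) => [j /eqP //|H].
by case: (eg_surj _ Hn) => j Ej; move: (H j); rewrite Ej eqxx.
Qed.

Lemma hT_spec (s : 'S_n) : [forall k, s (f k) == g k] ->
  forall i, eg (hT s i) = s (ef i).
Proof.
move=> Hs i; have Hinj : injectiveb (tfun s).
  apply/injectiveP => i1 i2 E0; apply: ef_inj; apply: (@perm_inj _ s).
  by rewrite -!tfun_spec // E0.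
by rewrite /hT insubd_permE // tfun_spec.
Qed.

Lemma DEL :
  \sum_(s : 'S_n | [forall k, s (f k) == g k]) \prod_(r | r \notin Sf) A r (s r)
  = per (del_mx A f g).
Proof.
rewrite /del_mx (per_conform _ _ _ _ _ (card_compl_img _ _ _ Hf) (card_compl_img _ _ _ Hg)).
rewrite (reindex_onto hS hT) /=; last first.
  move=> s Hs; apply/permP => r; rewrite hSE.
  case: (rowcase r) => [[k ->]|[i ->]]; rewrite ?sfun_f ?sfun_ef.
    by move/forallP: Hs => /(_ k) /eqP ->.
  by rewrite hT_spec.
apply: eq_big => t.
  have -> : [forall k, hS t (f k) == g k] by apply/forallP => k; rewrite hSE sfun_f.
  apply/eqP/permP => i; apply: eg_inj.
  rewrite hT_spec; first by rewrite hSE sfun_ef.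
  by apply/forallP => k; rewrite hSE sfun_f.
move=> _; rewrite (eq_bigl (fun r => r \in ~: Sf)); last by move=> r; rewrite in_setC.
rewrite big_enum_val; apply: eq_bigr => i _.
by rewrite mxE hSE sfun_ef.
Qed.
End Del.

Lemma sum_delta (R : nzSemiRingType) (T : finType) (b : T) (F : T -> R) :
  \sum_(a : T) ((a == b)%:R * F a) = F b.
Proof.
rewrite (bigD1 b) //= eqxx mul1r big1 ?addr0 // => a /negbTE ->.
by rewrite mul0r.
Qed.

Section Cmx.
Variable C : numClosedFieldType.
Variables m n : nat.

Local Notation fm := (m`!%:R : C).
Local Notation c := ((sqrtC fm)^-1).

Lemma fm_neq0 : fm != 0.
Proof. by rewrite pnatr_eq0 -lt0n fact_gt0. Qed.

Lemma c_conj : c^* = c.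
Proof. by apply: geC0_conj; rewrite invr_ge0 sqrtC_ge0 ler0n. Qed.

Lemma cc : c * c = fm^-1.
Proof. by rewrite -invfM -expr2 sqrtCK. Qed.

Lemma tinner_sb (alpha : {ffun 'I_m -> 'I_n}) (v : tvec C m n) :
  tinner (sym_basis C alpha) v = c * \sum_(u : 'S_m) v [ffun k => alpha (u k)].
Proof.
rewrite /tinner /sym_basis.
rewrite (eq_bigr (fun a => c * (\sum_(u : 'S_m) (a == [ffun k => alpha (u k)])%:R) * v a)); last first.
  move=> a _; rewrite geC0_conj //.
  by rewrite mulr_ge0 ?invr_ge0 ?sqrtC_ge0 ?ler0n // sumr_ge0 // => u _; rewrite ler0n.
under eq_bigr => a _ do rewrite -mulrA mulr_suml.
rewrite -mulr_sumr exchange_big /=; congr (_ * _); apply: eq_bigr => u _.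
exact: sum_delta.
Qed.

Lemma sb_eq (alpha beta : {ffun 'I_m -> 'I_n}) (u t : 'S_m) : incr alpha -> incr beta ->
  ([ffun k => alpha (u k)] == [ffun k => beta (t k)]) = (alpha == beta) && (u == t).
Proof.
move=> Ha Hb; apply/eqP/andP => [E|[/eqP <- /eqP <-] //].
have Eab : alpha = beta by rewrite -(sortf_incr_id _ _ alpha u Ha) E sortf_incr_id.
subst beta; split => //; apply/eqP/permP => k; apply: (incr_inj _ _ alpha Ha).
by move/ffunP: E => /(_ k); rewrite !ffunE.
Qed.

Lemma sb_orth (alpha beta : {ffun 'I_m -> 'I_n}) : incr alpha -> incr beta ->
  tinner (sym_basis C alpha) (sym_basis C beta) = (alpha == beta)%:R.
Proof.
move=> Ha Hb; rewrite tinner_sb /sym_basis.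
under eq_bigr => u _ do rewrite mulr_sumr.
rewrite mulr_sumr.
under eq_bigr => u _ do under eq_bigr => t _ do rewrite sb_eq //.
case: (alpha == beta) => /=; last first.
  by rewrite big1 // => u _; rewrite big1 ?mulr0 // => t _; rewrite mulr0.
rewrite (eq_bigr (fun _ => c * c)); last first.
  move=> u _; congr (_ * _); rewrite (bigD1 u) //= eqxx mulr1 big1 ?addr0 //.
  by move=> t; rewrite eq_sym => /negbTE ->; rewrite mulr0.
by rewrite sumr_const card_Sn cc -[_ *+ _]mulr_natr mulVf // fm_neq0.
Qed.


Lemma tinner_ext (u v w : tvec C m n) : (forall a, v a = w a) -> tinner u v = tinner u w.
Proof. by move=> H; rewrite /tinner; apply: eq_bigr => a _; rewrite H. Qed.

Lemma Pm_sb (J : {ffun 'I_m -> 'I_n}) : incr J ->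
  forall a, Pm (sym_basis C J) a = sym_basis C J a.
Proof.
move=> HJ a; rewrite /Pm (bigD1 J) //= sb_orth // eqxx mul1r big1 ?addr0 //.
by move=> al /andP [Hal NE]; rewrite sb_orth // (negbTE NE) mul0r.
Qed.

Lemma tinner_Pm (I : {ffun 'I_m -> 'I_n}) (w : tvec C m n) : incr I ->
  tinner (sym_basis C I) (Pm w) = tinner (sym_basis C I) w.
Proof.
move=> HI; rewrite {1}/tinner /Pm.
under eq_bigr => a _ do rewrite mulr_sumr.
rewrite exchange_big /=.
rewrite (bigD1 I) //= [X in _ + X]big1 ?addr0; last first.
  move=> al /andP [Hal NE]; rewrite (eq_bigr (fun a => tinner (sym_basis C al) w *
     ((sym_basis C I a)^* * sym_basis C al a))); last by move=> a _; rewrite mulrCA.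
  by rewrite -mulr_sumr -/(tinner _ _) sb_orth // eq_sym (negbTE NE) mulr0.
rewrite (eq_bigr (fun a => tinner (sym_basis C I) w *
     ((sym_basis C I a)^* * sym_basis C I a))); last by move=> a _; rewrite mulrCA.
by rewrite -mulr_sumr -/(tinner _ _) sb_orth // eqxx mulr1.
Qed.

Lemma symop_ext (X : 'I_m -> 'M[C]_n) (v w : tvec C m n) :
  (forall b, v b = w b) -> forall a, sym_op X v a = sym_op X w a.
Proof.
move=> H a; rewrite /sym_op /tensor_op; congr (_ * _); apply: eq_bigr => s _.
by apply: eq_bigr => b _; rewrite H.
Qed.

Lemma symop_sb (X : 'I_m -> 'M[C]_n) (J : {ffun 'I_m -> 'I_n}) a :
  sym_op X (sym_basis C J) a =
  fm^-1 * (c * \sum_(s : 'S_m) \sum_(t : 'S_m) \prod_(k < m) X (s k) (a k) (J (t k))).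
Proof.
rewrite /sym_op /tensor_op /sym_basis; congr (_ * _); rewrite mulr_sumr.
apply: eq_bigr => s _.
under eq_bigr => b _ do rewrite mulrCA mulr_sumr.
rewrite -mulr_sumr; congr (_ * _); rewrite exchange_big /=; apply: eq_bigr => t _.
under eq_bigr => b _ do rewrite mulrC.
rewrite (sum_delta _ _ [ffun k => J (t k)] (fun b => \prod_(k < m) X (s k) (a k) (b k))).
by apply: eq_bigr => k _; rewrite ffunE.
Qed.

Lemma Cmx_formula (X : 'I_m -> 'M[C]_n) (I J : {ffun 'I_m -> 'I_n}) : incr I -> incr J ->
  Cmx X I J = fm^-1 * fm^-1 *
    \sum_(u : 'S_m) \sum_(s : 'S_m) \sum_(t : 'S_m) \prod_(k < m) X (s k) (I (u k)) (J (t k)).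
Proof.
move=> HI HJ; rewrite /Cmx tinner_Pm // (tinner_ext _ _ _ (symop_ext X _ _ (Pm_sb J HJ))).
rewrite tinner_sb.
under eq_bigr => u _ do rewrite symop_sb mulrCA.
rewrite -mulr_sumr mulrA cc -mulr_sumr mulrA; congr (_ * _); apply: eq_bigr => u _.
apply: eq_bigr => s _; apply: eq_bigr => t _; apply: eq_bigr => k _.
by rewrite ffunE.
Qed.
End Cmx.

Section Main.
Variable C : numClosedFieldType.
Variables n m' : nat.
Local Notation m := m'.+1.
Variable A : 'M[C]_n.
Variable X : 'I_m -> 'M[C]_n.

Lemma Dper_Lk : Dper A X = Lk C m (per (\matrix_(r, c) (mconst m (A r c)
                    + \sum_(i < m) mvar C m i * mconst m (X i r c)))).
Proof. by []. Qed.

Lemma LHS1 : Dper A X = \sum_(s : 'S_n) \sum_(f : {ffun 'I_m -> 'I_n} | injectiveb f)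
   (\prod_(i < m) X i (f i) (s (f i))) * \prod_(r | r \notin [set f i | i in 'I_m]) A r (s r).
Proof.
rewrite Dper_Lk /per Lk_sum; apply: eq_bigr => s _.
under eq_bigr => r _ do rewrite mxE.
rewrite (eq_bigl (fun r => r \in [set: 'I_n])); last by move=> r; rewrite in_setT.
rewrite (eq_bigr (fun r => mconst m (A r (s r)) + \sum_(i < m) mvar C m i * mconst m (X (inord i) r (s r)))); last first.
  by move=> r _; congr (_ + _); apply: eq_bigr => i _; rewrite inord_val.
rewrite (P1 C n m [set: 'I_n] (fun r => A r (s r)) (fun r i => X (inord i) r (s r))).
apply: eq_big => f.
  by rewrite andb_idr // => _; apply/forallP => i; rewrite in_setT.
move=> _; congr (_ * _).
  by apply: eq_bigr => i _; rewrite inord_val.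
by apply: eq_bigl => r; rewrite in_setT.
Qed.

Lemma LHS2 : Dper A X = \sum_(f : {ffun 'I_m -> 'I_n} | injectiveb f)
   \sum_(g : {ffun 'I_m -> 'I_n} | injectiveb g)
     (\prod_(i < m) X i (f i) (g i)) * per (del_mx A f g).
Proof.
rewrite LHS1 exchange_big; apply: eq_bigr => f Hf.
have Hf' := elimT (injectiveP _) Hf.
under [RHS]eq_bigr => g Hg do rewrite -(DEL C n m A f g Hf' (elimT (injectiveP _) Hg)) mulr_sumr.
rewrite (exchange_big_dep predT) //=; apply: eq_bigr => s _.
rewrite (big_pred1 [ffun k => s (f k)]); last first.
  move=> g /=; apply/andP/eqP => [[_ /forallP H]|->].
    by apply/ffunP => k; rewrite ffunE; move/eqP: (H k) => ->.
  split; last by apply/forallP => k; rewrite ffunE.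
  by apply/injectiveP => k1 k2; rewrite !ffunE => /perm_inj /Hf'.
congr (_ * _); apply: eq_bigr => i _; by rewrite ffunE.
Qed.

Lemma img_perm (I : {ffun 'I_m -> 'I_n}) (u : 'S_m) :
  [set [ffun k => I (u k)] k | k in 'I_m] = [set I k | k in 'I_m].
Proof.
apply/setP => y; apply/imsetP/imsetP => [[i _ ->]|[i _ ->]].
  by exists (u i); rewrite ?ffunE.
by exists (u^-1%g i); rewrite // ffunE permKV.
Qed.

Lemma del_perm (I J : {ffun 'I_m -> 'I_n}) (u t : 'S_m) :
  del_mx A [ffun k => I (u k)] [ffun k => J (t k)] = del_mx A I J.
Proof. by rewrite /del_mx !img_perm. Qed.

Lemma double_sum (H : {ffun 'I_m -> 'I_n} -> {ffun 'I_m -> 'I_n} -> C) :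
  \sum_(I : {ffun 'I_m -> 'I_n} | incr I) \sum_(J : {ffun 'I_m -> 'I_n} | incr J)
    \sum_(u : 'S_m) \sum_(t : 'S_m) H [ffun k => I (u k)] [ffun k => J (t k)] =
  \sum_(f : {ffun 'I_m -> 'I_n} | injectiveb f) \sum_(g : {ffun 'I_m -> 'I_n} | injectiveb g) H f g.
Proof.
rewrite (sum_inj_incr _ _ _ (fun f => \sum_(g : {ffun 'I_m -> 'I_n} | injectiveb g) H f g)).
apply: eq_bigr => I _.
under [RHS]eq_bigr => u _ do rewrite (sum_inj_incr _ _ _ (fun g => H [ffun k => I (u k)] g)).
exact: exchange_big.
Qed.

Lemma reindex_ffun (s : 'S_m) (F : {ffun 'I_m -> 'I_n} -> C) :
  \sum_(f : {ffun 'I_m -> 'I_n} | injectiveb f) F f =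
  \sum_(f : {ffun 'I_m -> 'I_n} | injectiveb f) F [ffun k => f (s k)].
Proof.
rewrite (reindex (fun f : {ffun 'I_m -> 'I_n} => [ffun k => f (s k)])); last first.
  apply: onW_bij; exists (fun f : {ffun 'I_m -> 'I_n} => [ffun k => f (s^-1%g k)]).
    by move=> f; apply/ffunP => k; rewrite !ffunE permKV.
  by move=> f; apply/ffunP => k; rewrite !ffunE permK.
apply: eq_bigl => f; apply/injectiveP/injectiveP => H k1 k2.
  move=> E; apply: (@perm_inj _ (s^-1)%g); apply: H; by rewrite !ffunE !permKV.
by rewrite !ffunE => /H /perm_inj.
Qed.

Lemma perm_shift (s : 'S_m) :
  \sum_(f : {ffun 'I_m -> 'I_n} | injectiveb f) \sum_(g : {ffun 'I_m -> 'I_n} | injectiveb g)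
    per (del_mx A f g) * \prod_(k < m) X (s k) (f k) (g k) =
  \sum_(f : {ffun 'I_m -> 'I_n} | injectiveb f) \sum_(g : {ffun 'I_m -> 'I_n} | injectiveb g)
     (\prod_(i < m) X i (f i) (g i)) * per (del_mx A f g).
Proof.
rewrite (reindex_ffun s); apply: eq_bigr => f _.
rewrite (reindex_ffun s); apply: eq_bigr => g _.
rewrite (del_perm f g s s) mulrC; congr (_ * _).
rewrite [RHS](reindex_inj (@perm_inj _ s)) /=.
by apply: eq_bigr => k _; rewrite !ffunE.
Qed.

Local Notation fm := (m`!%:R : C).

Lemma RHS_eq :
  fm * \sum_(I : {ffun 'I_m -> 'I_n} | incr I) \sum_(J : {ffun 'I_m -> 'I_n} | incr J)
                 per (del_mx A I J) * Cmx X I J =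
  \sum_(f : {ffun 'I_m -> 'I_n} | injectiveb f) \sum_(g : {ffun 'I_m -> 'I_n} | injectiveb g)
     (\prod_(i < m) X i (f i) (g i)) * per (del_mx A f g).
Proof.
pose H (s : 'S_m) (f g : {ffun 'I_m -> 'I_n}) := per (del_mx A f g) * \prod_(k < m) X (s k) (f k) (g k).
have E1 : forall I J, incr I -> incr J -> per (del_mx A I J) * Cmx X I J =
   fm^-1 * fm^-1 * \sum_(s : 'S_m) \sum_(u : 'S_m) \sum_(t : 'S_m) H s [ffun k => I (u k)] [ffun k => J (t k)].
  move=> I J HI HJ; rewrite Cmx_formula // mulrCA; congr (_ * _).
  rewrite exchange_big mulr_sumr; apply: eq_bigr => s _.
  rewrite mulr_sumr; apply: eq_bigr => u _.
  rewrite mulr_sumr; apply: eq_bigr => t _.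
  rewrite /H del_perm; congr (_ * _); apply: eq_bigr => k _; by rewrite !ffunE.
rewrite (eq_bigr (fun I : {ffun 'I_m -> 'I_n} => \sum_(J : {ffun 'I_m -> 'I_n} | incr J) fm^-1 * fm^-1 *
   \sum_(s : 'S_m) \sum_(u : 'S_m) \sum_(t : 'S_m) H s [ffun k => I (u k)] [ffun k => J (t k)])); last first.
  by move=> I HI; apply: eq_bigr => J HJ; rewrite E1.
under eq_bigr => I _ do rewrite -mulr_sumr exchange_big /=.
rewrite -mulr_sumr exchange_big /= mulrA mulrA mulfV ?fm_neq0 // mul1r.
under eq_bigr => s _ do rewrite (double_sum (H s)) /H perm_shift.
rewrite sumr_const card_Sn; set L := \sum_(f | _) _; rewrite -(mulr_natl L) mulrA mulVf ?fm_neq0 ?mul1r //.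
Qed.
End Main.

(* B_{J,I} = per A(I|J), C_{I,J} = Cmx X I J, tr(BC) = sum_{I,J} B_{J,I} C_{I,J} *)
Theorem theorem2p5 (C : numClosedFieldType) (n m : nat) (A : 'M[C]_n)
    (X : 'I_m -> 'M[C]_n) :
  (1 <= m <= n)%N ->
  Dper A X =
    m`!%:R * \sum_(I : {ffun 'I_m -> 'I_n} | incr I)
               \sum_(J : {ffun 'I_m -> 'I_n} | incr J)
                 per (del_mx A I J) * Cmx X I J
  /\
  (forall Y : 'M[C]_n,
    Dper A (fun _ : 'I_m => Y) =
    m`!%:R * \sum_(I : {ffun 'I_m -> 'I_n} | incr I)
               \sum_(J : {ffun 'I_m -> 'I_n} | incr J)
                 per (del_mx A I J) * Cmx (fun _ : 'I_m => Y) I J).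
Proof.
case: m X => [|m'] X; first by [].
move=> _.
have key : forall X' : 'I_m'.+1 -> 'M[C]_n,
  Dper A X' = m'.+1`!%:R * \sum_(I : {ffun 'I_m'.+1 -> 'I_n} | incr I)
               \sum_(J : {ffun 'I_m'.+1 -> 'I_n} | incr J)
                 per (del_mx A I J) * Cmx X' I J.
  by move=> X'; rewrite LHS2 RHS_eq.
by split; [exact: key | move=> Y; exact: key].
Qed.
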